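(* Let $\Omega\subset\mathbb{R}^3$ be the open octahedron with vertices $\pm e_1,\pm e_2,\pm e_3$ ($e_m$ the unit vectors), and let $\mathcal{T}$ be its partition into the eight congruent tetrahedra each of which is the convex hull of one 2-face of $\Omega$ and the origin. Define the piecewise constant function $\bar q_h(x)=\operatorname{sgn}(x_1)\operatorname{sgn}(x_2)\operatorname{sgn}(x_3)$ for $x=(x_1,x_2,x_3)\in\Omega$. Then $\bar q_h\in\mathcal{L}^0_0(\mathcal{T})\cap L^2_0(\Omega)$ and \[\langle\operatorname{div}v_h,\bar q_h\rangle=0\qquad\text{for all } v_h\in\mathcal{L}^1_2(\mathcal{T};\mathbb{R}^3)\cap W^{1,1}_0(\Omega;\mathbb{R}^3).\]
   Context: $\mathcal{L}^s_k(\mathcal{T})$ denotes the space of functions in $W^{s,1}(\Omega)$ that are piecewise polynomials of degree at most $k$ on $\mathcal{T}$ (so $\mathcal{L}^0_0(\mathcal{T})$ are piecewise constants and $\mathcal{L}^1_2(\mathcal{T};\mathbb{R}^3)$ are continuous piecewise quadratic vector fields). $L^2_0(\Omega)$ is the space of $L^2$ functions with zero mean, and $\langle\cdot,\cdot\rangle$ the $L^2(\Omega)$ inner product. *)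

(* Defs.v *)
From HB Require Import structures.
From mathcomp Require Import all_boot all_order all_algebra.
From mathcomp Require Import all_classical all_reals all_analysis.
Set Implicit Arguments. Unset Strict Implicit. Unset Printing Implicit Defensive.
Import Order.TTheory GRing.Theory Num.Theory.
Import numFieldNormedType.Exports.
Local Open Scope classical_set_scope.
Local Open Scope ring_scope.

Section Octa.
Variable R : realType.

Definition X1 (x : R * R * R) : R := x.1.1.
Definition X2 (x : R * R * R) : R := x.1.2.
Definition X3 (x : R * R * R) : R := x.2.

Definition leb3 := (((@lebesgue_measure R) \x (@lebesgue_measure R)) \x (@lebesgue_measure R))%E.

Definition Omega : set (R * R * R) := [set x | `|X1 x| + `|X2 x| + `|X3 x| < 1].

Definition sgnb (b : bool) : R := if b then 1 else -1.

(* closed tetrahedron: convex hull of the origin and the 2-face of Omega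
   lying in the octant with signs (sgnb b1, sgnb b2, sgnb b3) *)
Definition tetra (b1 b2 b3 : bool) : set (R * R * R) :=
  [set x | 0 <= sgnb b1 * X1 x /\ 0 <= sgnb b2 * X2 x /\ 0 <= sgnb b3 * X3 x /\
           sgnb b1 * X1 x + sgnb b2 * X2 x + sgnb b3 * X3 x <= 1].

Definition P2 (p : R * R * R -> R) : Prop :=
  exists c a1 a2 a3 b11 b22 b33 b12 b13 b23 : R, forall x,
    p x = c + a1 * X1 x + a2 * X2 x + a3 * X3 x
          + b11 * X1 x ^+ 2 + b22 * X2 x ^+ 2 + b33 * X3 x ^+ 2
          + b12 * X1 x * X2 x + b13 * X1 x * X3 x + b23 * X2 x * X3 x.

(* scalar component of an element of L^1_2(T): on each closed tetrahedron it
   coincides with a polynomial of degree <= 2 (a single function agreeing with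
   the pieces on the closed cells is exactly a continuous piecewise quadratic) *)
Definition L12 (f : R * R * R -> R) : Prop :=
  forall b1 b2 b3 : bool, exists p, P2 p /\ forall x, tetra b1 b2 b3 x -> f x = p x.

Definition zero_on_bd (f : R * R * R -> R) : Prop :=
  forall x, `|X1 x| + `|X2 x| + `|X3 x| = 1 -> f x = 0.

(* divergence of (v1, v2, v3), computed with classical partial derivatives
   (which coincide a.e. with the weak ones for continuous piecewise polynomials) *)
Definition div3 (v1 v2 v3 : R * R * R -> R) (x : R * R * R) : R :=
  derive1 (fun t => v1 ((t, X2 x), X3 x)) (X1 x)
  + derive1 (fun t => v2 ((X1 x, t), X3 x)) (X2 x)
  + derive1 (fun t => v3 ((X1 x, X2 x), t)) (X3 x).

Definition qbar (x : R * R * R) : R := Num.sg (X1 x) * Num.sg (X2 x) * Num.sg (X3 x).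

End Octa.

(* Main.v *)
Require Import Defs.
From HB Require Import structures.
From mathcomp Require Import all_boot all_order all_algebra.
From mathcomp Require Import all_classical all_reals all_analysis.
From mathcomp Require Import measurable_realfun ring lra.
Import Order.TTheory GRing.Theory Num.Theory.
Import numFieldNormedType.Exports.
Local Open Scope classical_set_scope.
Local Open Scope ring_scope.

Local Open Scope ereal_scope.
Lemma G1 (R : realType) (al be d0 d1 d2 d3 : R) : (al < be)%R ->
  \int[@lebesgue_measure R]_(t in `]al, be[) (d0 + d1*t + d2*t^+2 + d3*t^+3)%:E =
  ((d0*be + d1/2*be^+2 + d2/3*be^+3 + d3/4*be^+4) - (d0*al + d1/2*al^+2 + d2/3*al^+3 + d3/4*al^+4))%:E.
Proof.
move=> ab.
pose Q : {poly R} := (d0 *: 'X + (d1/2) *: 'X^2 + (d2/3) *: 'X^3 + (d3/4) *: 'X^4)%R.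
have QE t : Q.[t] = (d0*t + d1/2*t^+2 + d2/3*t^+3 + d3/4*t^+4)%R.
  by rewrite /Q !hornerE.
have Q'E t : (Q^`()).[t] = (d0 + d1*t + d2*t^+2 + d3*t^+3)%R.
  rewrite /Q !derivD !derivZ derivX !derivXn /= !hornerE /=.
  by field.
transitivity (\int[@lebesgue_measure R]_(t in `[al, be]) (d0 + d1*t + d2*t^+2 + d3*t^+3)%:E).
  symmetry; apply: (@integral_itv_bndoo R al be _ true false).
  apply/measurable_EFinP; apply: measurable_funD; last by apply: measurable_funM => //; apply: measurable_funX.
  apply: measurable_funD; last by apply: measurable_funM => //; apply: measurable_funX.
  apply: measurable_funD => //; by apply: measurable_funM.
rewrite (@continuous_FTC2 _ _ (horner Q)) //.
- by rewrite !QE EFinB.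
- apply: continuous_subspaceT => x.
  have -> : (fun t : R => (d0 + d1*t + d2*t^+2 + d3*t^+3)%R) = horner (Q^`()).
    by apply/funext => t; rewrite Q'E.
  exact: continuous_horner.
- split.
  + by move=> x _; exact: derivable_horner.
  + by apply: cvg_at_right_filter; apply: continuous_horner.
  + by apply: cvg_at_left_filter; apply: continuous_horner.
- by move=> x _; rewrite -derivE Q'E.
Qed.

Lemma G2 (R : realType) (s : bool) (a c0 c1 c2 c3 : R) (P : R -> R) :
  (forall t, P t = c0 + c1*t + c2*t^+2 + c3*t^+3)%R ->
  \int[@lebesgue_measure R]_t (if (0 < sgnb R s * t)%R && (`|t| < a)%R then P `|t| else 0)%:E
  = (if (0 < a)%R then c0*a + c1/2*a^+2 + c2/3*a^+3 + c3/4*a^+4 else 0)%:E.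
Proof.
move=> HP.
have [a0|a0] := leP a 0%R.
  rewrite (_ : (fun t => _) = cst 0); first by rewrite integral0.
  apply/funext => t; rewrite (_ : (`|t| < a)%R = false) ?andbF //.
  by apply/negbTE; rewrite -leNgt (le_trans a0).
case: s.
- rewrite (_ : (fun t => _) = ((fun t => (P t)%:E) \_ `]0%R, a[)); last first.
    apply/funext => t; rewrite patchE /sgnb mul1r.
    case: ifPn => [/andP[t0 ta]|].
      by rewrite mem_set ?gtr0_norm //= in_itv /= t0 -(gtr0_norm t0).
    rewrite mem_setE in_itv /= negb_and => /orP[] H.
      by rewrite (negbTE H).
    have [t0|//] := ltP 0%R t; by rewrite -(gtr0_norm t0) (negbTE H) andbF.
  rewrite -integral_mkcond.
  under eq_integral => t _ do rewrite HP.
  by rewrite G1 //; congr EFin; field.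
- rewrite (_ : (fun t => _) = ((fun t => (P (- t))%:E) \_ `](- a)%R, 0%R[)); last first.
    apply/funext => t; rewrite patchE /sgnb mulN1r oppr_gt0.
    case: ifPn => [/andP[t0 ta]|].
      by rewrite mem_set ?ltr0_norm //= in_itv /= t0 andbT ltrNl -(ltr0_norm t0).
    rewrite mem_setE in_itv /= negb_and => /orP[] H.
      by rewrite (negbTE H) andbF.
    case: (ltP t 0%R) => t0; last by case: ifP => // /andP[].
    by rewrite ltrNl -(ltr0_norm t0) (negbTE H).
  rewrite -integral_mkcond.
  transitivity (\int[@lebesgue_measure R]_(t in `](- a)%R, 0%R[) (c0 + (- c1)*t + c2*t^+2 + (- c3)*t^+3)%:E).
    by apply: eq_integral => t _; rewrite HP; congr EFin; ring.
  by rewrite G1 ?oppr_lt0 //; congr EFin; field.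
Qed.
Local Close Scope ereal_scope.
Section Meas.
Context (R : realType) (d : measure_display) (T : measurableType d).

Lemma mset_gt0 (f : T -> R) : measurable_fun setT f -> measurable [set x | (0 < f x)%R].
Proof.
move=> mf; have := mf measurableT _ (@measurable_itv _ `]0%R, +oo[).
by rewrite setTI; congr measurable; apply/seteqP; split => x /=; rewrite in_itv /= andbT.
Qed.

Lemma mset_and (b1 b2 : T -> bool) : measurable [set x | b1 x] -> measurable [set x | b2 x] ->
  measurable [set x | b1 x && b2 x].
Proof.
move=> m1 m2; rewrite (_ : [set x | _] = [set x | b1 x] `&` [set x | b2 x]); first exact: measurableI.
by apply/seteqP; split => x /=; [move/andP|move=> [-> ->]].
Qed.

Lemma mfun_if (b : T -> bool) (u : T -> R) : measurable [set x | b x] -> measurable_fun setT u ->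
  measurable_fun setT (fun x => if b x then u x else 0%R).
Proof.
move=> mb mu; rewrite (_ : (fun x => _) = (fun x => \1_[set x | b x] x * u x)%R).
  by apply: measurable_funM => //; exact: measurable_indic.
apply/funext => x; rewrite indicE; case: ifP => bx.
  by rewrite mem_set // mul1r.
by rewrite memNset ?mul0r //= bx.
Qed.
End Meas.

Section Meas3.
Context (R : realType).
Lemma mX1 : measurable_fun setT (@X1 R).
Proof. exact: measurableT_comp measurable_fst measurable_fst. Qed.
Lemma mX2 : measurable_fun setT (@X2 R).
Proof. exact: measurableT_comp measurable_snd measurable_fst. Qed.
Lemma mX3 : measurable_fun setT (@X3 R).
Proof. exact: measurable_snd. Qed.
End Meas3.

Local Open Scope ereal_scope.
Lemma prodleb_sf (R : realType) : sigma_finite setT ((@lebesgue_measure R) \x (@lebesgue_measure R)).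
Proof.
have /sigma_finiteP[F [TF ndF Foo]] := sigma_finiteT (@lebesgue_measure R).
have /sigma_finiteP[G [TG ndG Goo]] := sigma_finiteT (@lebesgue_measure R).
exists (fun n => F n `*` G n).
 rewrite -setXTT {1}TF TG predeqE => -[x y]; split.
    move=> [/= [n _ Fnx] [k _ Gky]]; exists (maxn n k) => //; split.
    - by move: x Fnx; exact/subsetPset/ndF/leq_maxl.
    - by move: y Gky; exact/subsetPset/ndG/leq_maxr.
  by move=> [n _ []/= ? ?]; split; exists n.
move=> k; have [? ?] := Foo k; have [? ?] := Goo k.
split; first exact: measurableX.
by rewrite product_measure1E// lte_mul_pinfty// ge0_fin_numE.
Qed.
Definition leb2 (R : realType) := ((@lebesgue_measure R) \x (@lebesgue_measure R)).
HB.instance Definition _ (R : realType) := Measure.on (leb2 R).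
HB.instance Definition _ (R : realType) := Measure_isSigmaFinite.Build _ _ _ (leb2 R) (prodleb_sf R).
Local Close Scope ereal_scope.

Set Implicit Arguments. Unset Strict Implicit. Unset Printing Implicit Defensive.

Definition octb (R : realType) (b1 b2 b3 : bool) (x : R * R * R) : bool :=
  [&& (0 < sgnb R b1 * X1 x), (0 < sgnb R b2 * X2 x), (0 < sgnb R b3 * X3 x) &
      (`|X1 x| + `|X2 x| + `|X3 x| < 1)].

Definition gfun (R : realType) (b1 b2 b3 : bool) (c0 c1 c2 c3 : R) (x : R * R * R) : R :=
  if octb b1 b2 b3 x then c0 + c1 * `|X1 x| + c2 * `|X2 x| + c3 * `|X3 x| else 0.

Section K.
Context (R : realType).

Lemma mgfun b1 b2 b3 (c0 c1 c2 c3 : R) : measurable_fun setT (gfun b1 b2 b3 c0 c1 c2 c3).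
Proof.
have mN : measurable_fun setT (fun x : R => `|x|) by exact: normr_measurable.
apply: mfun_if.
  apply: mset_and; [|apply: mset_and; [|apply: mset_and]].
  - by apply: mset_gt0; apply: measurable_funM => //; exact: mX1.
  - by apply: mset_gt0; apply: measurable_funM => //; exact: mX2.
  - by apply: mset_gt0; apply: measurable_funM => //; exact: mX3.
  - rewrite (_ : [set x | _] = [set x : R * R * R | 0 < 1 - (`|X1 x| + `|X2 x| + `|X3 x|)]); last first.
      by apply/seteqP; split => x /=; rewrite subr_gt0.
    apply: mset_gt0.
    apply: measurable_funB => //; apply: measurable_funD; [apply: measurable_funD|].
    + apply: measurableT_comp; [exact: mN|exact: mX1].
    + apply: measurableT_comp; [exact: mN|exact: mX2].
    + apply: measurableT_comp; [exact: mN|exact: mX3].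
apply: measurable_funD; [apply: measurable_funD; [apply: measurable_funD|]|].
- by [].
- by apply: measurable_funM => //; apply: measurableT_comp; [exact: mN|exact: mX1].
- by apply: measurable_funM => //; apply: measurableT_comp; [exact: mN|exact: mX2].
- by apply: measurable_funM => //; apply: measurableT_comp; [exact: mN|exact: mX3].
Qed.


Lemma ltB3 (a u v : R) : (0 < a - u - v) = (v < a - u).
Proof. by apply/idP/idP => H; lra. Qed.

Lemma gfun_ge0 b1 b2 b3 (c0 c1 c2 c3 : R) x : 0 <= c0 -> 0 <= c1 -> 0 <= c2 -> 0 <= c3 ->
  0 <= gfun b1 b2 b3 c0 c1 c2 c3 x.
Proof.
move=> h0 h1 h2 h3; rewrite /gfun; case: ifP => // _.
by rewrite !addr_ge0 // mulr_ge0.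
Qed.

Lemma alg1 (c0 c1 c2 c3 X T : R) : ((c0 + c1*X + c2*T)*(1 - X - T) + c3/2*(1 - X - T)^+2) =
  ((c0 + c1*X)*(1-X) + c3/2*(1-X)^+2 + (-(c0+c1*X) + c2*(1-X) - c3*(1-X))*T + (-c2 + c3/2)*T^+2 + 0*T^+3).
Proof. by field. Qed.

Local Open Scope ereal_scope.
Lemma K_ge0 b1 b2 b3 (c0 c1 c2 c3 : R) : (0 <= c0)%R -> (0 <= c1)%R -> (0 <= c2)%R -> (0 <= c3)%R ->
  \int[@leb3 R]_x (gfun b1 b2 b3 c0 c1 c2 c3 x)%:E = (c0/6 + (c1+c2+c3)/24)%:E.
Proof.
move=> hc0 hc1 hc2 hc3.
set f3 := fun x => (gfun b1 b2 b3 c0 c1 c2 c3 x)%:E.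
have mf3 : measurable_fun setT f3 by apply/measurable_EFinP; exact: mgfun.
have f3ge0 x : 0 <= f3 x by rewrite lee_fin; exact: gfun_ge0.
have T1 := @fubini_tonelli1 _ _ _ _ R (leb2 R) (@lebesgue_measure R) f3 mf3 f3ge0.
rewrite /leb3 -/(leb2 R) T1.
pose h2 (y : R * R) : R := (if (0 < sgnb R b1 * y.1) && (0 < sgnb R b2 * y.2) then
   (if 0 < 1 - `|y.1| - `|y.2| then (c0 + c1 * `|y.1| + c2 * `|y.2|) * (1 - `|y.1| - `|y.2|)
         + c3 / 2 * (1 - `|y.1| - `|y.2|) ^+ 2 else 0) else 0)%R.
have E2 y : fubini_F (@lebesgue_measure R) f3 y = (h2 y)%:E.
  case: y => y1 y2; rewrite /fubini_F /h2 /=.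
  case: ifPn => H.
    rewrite (_ : (fun t => f3 (y1, y2, t)) = fun t => (if (0 < sgnb R b3 * t) && (`|t| < 1 - `|y1| - `|y2|) then
       (fun u => (c0 + c1 * `|y1| + c2 * `|y2|) + c3 * u + 0 * u ^+ 2 + 0 * u ^+ 3) `|t| else 0)%R%:E).
      rewrite (@G2 R b3 (1 - `|y1| - `|y2|)%R (c0 + c1 * `|y1| + c2 * `|y2|)%R c3 0%R 0%R (fun u => (c0 + c1 * `|y1| + c2 * `|y2|) + c3 * u + 0 * u ^+ 2 + 0 * u ^+ 3)%R) // ltB3.
      by case: ifP => _ //; congr EFin; field.
    apply/funext => t; rewrite /f3 /gfun /octb /X1 /X2 /X3 /=.
    move: H => /andP[-> ->] /=.
    have -> : (`|y1| + `|y2| + `|t| < 1)%R = (`|t| < 1 - `|y1| - `|y2|)%R by apply/idP/idP => ?; lra.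
    by case: ifP => _ //; congr EFin; ring.
  rewrite (_ : (fun t => f3 (y1, y2, t)) = cst 0); first by rewrite integral0.
  apply/funext => t; rewrite /f3 /gfun /octb /X1 /X2 /X3 /=.
  move: H; rewrite negb_and => /orP[] /negbTE -> //=.
  by rewrite andbF.
set f2 := fun y => (h2 y)%:E.
have mf2 : measurable_fun setT f2.
  have := @measurable_fun_fubini_tonelli_F _ _ _ _ R (@lebesgue_measure R) f3 mf3 f3ge0.
  by rewrite (_ : fubini_F _ _ = f2) //; apply/funext => y; rewrite E2.
have f2ge0 y : 0 <= f2 y by rewrite /f2 -E2; apply: integral_ge0 => t _; exact: f3ge0.
transitivity (\int[leb2 R]_y f2 y); first by apply: eq_integral => y _; exact: E2.
have T2 := @fubini_tonelli1 _ _ _ _ R (@lebesgue_measure R) (@lebesgue_measure R) f2 mf2 f2ge0.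
rewrite /leb2 T2.
pose h1 (x : R) : R := (if 0 < sgnb R b1 * x then
   (if 0 < 1 - `|x| then (c0 + c1 * `|x|) * (1 - `|x|) ^+ 2 / 2 + (c2 + c3) / 6 * (1 - `|x|) ^+ 3 else 0) else 0)%R.
have E1 x : fubini_F (@lebesgue_measure R) f2 x = (h1 x)%:E.
  rewrite /fubini_F /f2 /h2 /h1 /=.
  case: ifPn => H.
    rewrite (_ : (fun y => _) = fun t => (if (0 < sgnb R b2 * t) && (`|t| < 1 - `|x|) then
       (fun u => ((c0 + c1 * `|x|) * (1 - `|x|) + c3 / 2 * (1 - `|x|) ^+ 2)
          + (- (c0 + c1 * `|x|) + c2 * (1 - `|x|) - c3 * (1 - `|x|)) * u
          + (- c2 + c3 / 2) * u ^+ 2 + 0 * u ^+ 3) `|t| else 0)%R%:E).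
      rewrite (@G2 R b2 (1 - `|x|)%R ((c0 + c1 * `|x|) * (1 - `|x|) + c3 / 2 * (1 - `|x|) ^+ 2)%R
          (- (c0 + c1 * `|x|) + c2 * (1 - `|x|) - c3 * (1 - `|x|))%R (- c2 + c3 / 2)%R 0%R
          (fun u => ((c0 + c1 * `|x|) * (1 - `|x|) + c3 / 2 * (1 - `|x|) ^+ 2)
          + (- (c0 + c1 * `|x|) + c2 * (1 - `|x|) - c3 * (1 - `|x|)) * u
          + (- c2 + c3 / 2) * u ^+ 2 + 0 * u ^+ 3)%R) //.
      by case: ifP => _ //; congr EFin; field.
    apply/funext => t /=; rewrite ltB3.
    case: (0 < sgnb R b2 * t)%R => //=.
    by case: ifP => _ //; congr EFin; exact: alg1.
  rewrite (_ : (fun y => _) = cst 0); first by rewrite integral0.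
  by apply/funext => t /=.
transitivity (\int[@lebesgue_measure R]_y (h1 y)%:E); first by apply: eq_integral => y _; exact: E1.
rewrite (_ : (fun x => (h1 x)%:E) = fun t => (if (0 < sgnb R b1 * t) && (`|t| < 1) then
   (fun u => (c0/2 + (c2 + c3)/6) + ((c1 - 2 * c0)/2 - 3 * ((c2 + c3)/6)) * u
       + ((c0 - 2 * c1)/2 + 3 * ((c2 + c3)/6)) * u ^+ 2 + (c1/2 - (c2 + c3)/6) * u ^+ 3) `|t| else 0)%R%:E).
  rewrite (@G2 R b1 1%R (c0/2 + (c2 + c3)/6)%R ((c1 - 2 * c0)/2 - 3 * ((c2 + c3)/6))%R
      ((c0 - 2 * c1)/2 + 3 * ((c2 + c3)/6))%R (c1/2 - (c2 + c3)/6)%R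
      (fun u => (c0/2 + (c2 + c3)/6) + ((c1 - 2 * c0)/2 - 3 * ((c2 + c3)/6)) * u
       + ((c0 - 2 * c1)/2 + 3 * ((c2 + c3)/6)) * u ^+ 2 + (c1/2 - (c2 + c3)/6) * u ^+ 3)%R) //.
  by rewrite ltr01; congr EFin; field.
apply/funext => t /=; rewrite /h1 subr_gt0.
case: (0 < sgnb R b1 * t)%R => //=.
by case: ifP => _ //; congr EFin; ring.
Qed.
Local Close Scope ereal_scope.
Lemma gfun_int b1 b2 b3 (c0 c1 c2 c3 : R) : (0 <= c0)%R -> (0 <= c1)%R -> (0 <= c2)%R -> (0 <= c3)%R ->
  (@leb3 R).-integrable setT (fun x => (gfun b1 b2 b3 c0 c1 c2 c3 x)%:E).
Proof.
move=> hc0 hc1 hc2 hc3; apply/integrableP; split.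
  by apply/measurable_EFinP; exact: mgfun.
rewrite (_ : (fun x => _) = (fun x => (gfun b1 b2 b3 c0 c1 c2 c3 x)%:E)).
  by rewrite K_ge0 // ltry.
by apply/funext => x; rewrite gee0_abs // lee_fin gfun_ge0.
Qed.

Definition pp (c : R) : R := if (0 <= c)%R then c else 0%R.
Definition nn (c : R) : R := if (0 <= c)%R then 0%R else (- c)%R.
Lemma pp_ge0 c : (0 <= pp c)%R. Proof. by rewrite /pp; case: ifP. Qed.
Lemma nn_ge0 c : (0 <= nn c)%R.
Proof. by rewrite /nn; case: ifP => // /negbT; rewrite -ltNge oppr_ge0 => /ltW. Qed.
Lemma ppnn c : (pp c - nn c = c)%R.
Proof. by rewrite /pp /nn; case: ifP => _; rewrite ?subr0 ?sub0r ?opprK. Qed.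

Lemma gfunE b1 b2 b3 (c0 c1 c2 c3 : R) x : gfun b1 b2 b3 c0 c1 c2 c3 x =
  (gfun b1 b2 b3 (pp c0) (pp c1) (pp c2) (pp c3) x - gfun b1 b2 b3 (nn c0) (nn c1) (nn c2) (nn c3) x)%R.
Proof.
rewrite /gfun; case: ifP => _; last by rewrite subr0.
by rewrite -{1}(ppnn c0) -{1}(ppnn c1) -{1}(ppnn c2) -{1}(ppnn c3); ring.
Qed.

Lemma K_int b1 b2 b3 (c0 c1 c2 c3 : R) :
  (@leb3 R).-integrable setT (fun x => (gfun b1 b2 b3 c0 c1 c2 c3 x)%:E) /\
  (\int[@leb3 R]_x (gfun b1 b2 b3 c0 c1 c2 c3 x)%:E = (c0/6 + (c1+c2+c3)/24)%:E)%E.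
Proof.
have ip := gfun_int b1 b2 b3 (pp_ge0 c0) (pp_ge0 c1) (pp_ge0 c2) (pp_ge0 c3).
have in_ := gfun_int b1 b2 b3 (nn_ge0 c0) (nn_ge0 c1) (nn_ge0 c2) (nn_ge0 c3).
have -> : (fun x => (gfun b1 b2 b3 c0 c1 c2 c3 x)%:E) = (fun x =>
   (gfun b1 b2 b3 (pp c0) (pp c1) (pp c2) (pp c3) x)%:E - (gfun b1 b2 b3 (nn c0) (nn c1) (nn c2) (nn c3) x)%:E)%E.
  by apply/funext => x; rewrite gfunE EFinB.
split; first exact: integrableB.
rewrite integralB_EFin // !K_ge0 ?pp_ge0 ?nn_ge0 //.
congr EFin; rewrite -{3}(ppnn c0) -{3}(ppnn c1) -{3}(ppnn c2) -{3}(ppnn c3).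
by field.
Qed.
End K.

Definition octs : seq (bool * bool * bool) := [:: (true,true,true); (true,true,false); (true,false,true);
  (true,false,false); (false,true,true); (false,true,false); (false,false,true); (false,false,false)].

Definition Gfun (R : realType) (C0 C1 C2 C3 : bool -> bool -> bool -> R) (x : R * R * R) : R :=
  \sum_(s <- octs) gfun s.1.1 s.1.2 s.2 (C0 s.1.1 s.1.2 s.2) (C1 s.1.1 s.1.2 s.2)
     (C2 s.1.1 s.1.2 s.2) (C3 s.1.1 s.1.2 s.2) x.

Section ML.
Context (R : realType).

Lemma mOmega : measurable (@Omega R).
Proof.
rewrite (_ : @Omega R = [set x : R * R * R | 0 < 1 - (`|X1 x| + `|X2 x| + `|X3 x|)]); last first.
  by apply/seteqP; split => x /=; rewrite subr_gt0.
have mN : measurable_fun setT (fun x : R => `|x|) by exact: normr_measurable.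
apply: mset_gt0.
apply: measurable_funB => //; apply: measurable_funD; [apply: measurable_funD|].
- apply: measurableT_comp; [exact: mN|exact: mX1].
- apply: measurableT_comp; [exact: mN|exact: mX2].
- apply: measurableT_comp; [exact: mN|exact: mX3].
Qed.

Lemma gfun_out b1 b2 b3 (c0 c1 c2 c3 : R) x : ~ @Omega R x -> gfun b1 b2 b3 c0 c1 c2 c3 x = 0.
Proof.
move=> H; rewrite /gfun /octb; case: ifP => // /and4P[_ _ _ h].
by exfalso; apply: H.
Qed.

Variables (C0 C1 C2 C3 : bool -> bool -> bool -> R).

Lemma ML_int : (@leb3 R).-integrable (@Omega R) (fun x => (Gfun C0 C1 C2 C3 x)%:E).
Proof.
apply: (@integrableS _ _ _ _ setT) => //; first exact: mOmega.
rewrite (_ : (fun x => _) = (fun x => \sum_(s <- octs) (gfun s.1.1 s.1.2 s.2 (C0 s.1.1 s.1.2 s.2) (C1 s.1.1 s.1.2 s.2)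
     (C2 s.1.1 s.1.2 s.2) (C3 s.1.1 s.1.2 s.2) x)%:E)%E); last first.
  by apply/funext => x; rewrite sumEFin.
apply: integrable_sum => //.
by move=> s _; exact: (K_int _ _ _ _ _ _ _).1.
Qed.

Lemma ML_val : (\int[@leb3 R]_(x in @Omega R) (Gfun C0 C1 C2 C3 x)%:E =
  (\sum_(s <- octs) (C0 s.1.1 s.1.2 s.2 / 6 + (C1 s.1.1 s.1.2 s.2 + C2 s.1.1 s.1.2 s.2 + C3 s.1.1 s.1.2 s.2) / 24))%:E)%E.
Proof.
rewrite integral_mkcond.
rewrite (_ : ((fun x => (Gfun C0 C1 C2 C3 x)%:E) \_ @Omega R) = (fun x => \sum_(s <- octs) (gfun s.1.1 s.1.2 s.2 (C0 s.1.1 s.1.2 s.2) (C1 s.1.1 s.1.2 s.2)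
     (C2 s.1.1 s.1.2 s.2) (C3 s.1.1 s.1.2 s.2) x)%:E)%E); last first.
  apply/funext => x; rewrite patchE sumEFin; case: ifPn => // /negP.
  rewrite inE => H; rewrite big1_seq // => s _; exact: gfun_out.
rewrite integral_sum //; last by move=> s; exact: (K_int _ _ _ _ _ _ _).1.
rewrite -sumEFin; apply: eq_bigr => s _; exact: (K_int _ _ _ _ _ _ _).2.
Qed.
End ML.

Set Implicit Arguments. Unset Strict Implicit. Unset Printing Implicit Defensive.

Section N.
Context (R : realType).

Lemma N1 (b : bool) (u r : R) : 0 < sgnb R b * u -> sgnb R b * u < r ->
  \forall t \near u, 0 <= sgnb R b * t /\ sgnb R b * t <= r.
Proof.
move=> h1 h2.
apply/nbhs_ballP; exists (Num.min (sgnb R b * u) (r - sgnb R b * u)).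
  by rewrite /= lt_min h1 subr_gt0 h2.
move=> t; rewrite /ball /= lt_min => /andP[e1 e2].
move: e1 e2; rewrite !ltr_distl => /andP[a1 a2] /andP[a3 a4].
by case: b h1 h2 a1 a2 a3 a4; rewrite /sgnb ?mul1r ?mulN1r => *; split; lra.
Qed.

Lemma dpoly (f : R -> R) (a A B C : R) : (\forall t \near a, f t = A + B * t + C * t ^+ 2) ->
  derive1 f a = B + 2 * C * a.
Proof.
move=> H; rewrite derive1E (near_eq_derive _ H).
have -> : (fun t => A + B * t + C * t ^+ 2) = horner (A%:P + B *: 'X + C *: 'X^2).
  by apply/funext => t; rewrite !hornerE.
rewrite -derive1E -derivE !derivD !derivZ derivC derivX derivXn /= !hornerE.
by field.
Qed.

Variant sgn_spec (v : R) : bool -> bool -> bool -> Prop :=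
| SPos of 0 < v : sgn_spec v true false true
| SNeg of v < 0 : sgn_spec v false true true
| SZero of v = 0 : sgn_spec v false false false.

Lemma sgnP (v : R) : sgn_spec v (0 < v) (v < 0) (v != 0).
Proof.
by case: (ltgtP v 0) => h; constructor.
Qed.

Lemma SumOct (x : R * R * R) (f : bool -> bool -> bool -> R) : @Omega R x ->
  \sum_(s <- octs) (if octb s.1.1 s.1.2 s.2 x then f s.1.1 s.1.2 s.2 else 0) =
  if [&& X1 x != 0, X2 x != 0 & X3 x != 0] then f (0 < X1 x) (0 < X2 x) (0 < X3 x) else 0.
Proof.
rewrite /Omega /= => hO.
rewrite /octs !big_cons big_nil /octb /sgnb /= !mul1r !mulN1r !oppr_gt0 hO !andbT.
by case: (sgnP (X1 x)); case: (sgnP (X2 x)); case: (sgnP (X3 x)) => * /=;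
  rewrite ?addr0 ?add0r.
Qed.

Definition pol (K : nat -> R) (x : R * R * R) : R :=
  K 0%N + K 1%N * X1 x + K 2%N * X2 x + K 3%N * X3 x + K 4%N * X1 x ^+ 2 + K 5%N * X2 x ^+ 2
  + K 6%N * X3 x ^+ 2 + K 7%N * X1 x * X2 x + K 8%N * X1 x * X3 x + K 9%N * X2 x * X3 x.

Lemma L12_coef (v : R * R * R -> R) : L12 v -> exists K : bool -> bool -> bool -> nat -> R,
  forall b1 b2 b3 x, tetra b1 b2 b3 x -> v x = pol (K b1 b2 b3) x.
Proof.
move=> H.
have : forall b : bool * bool * bool, exists k : nat -> R, forall x, tetra b.1.1 b.1.2 b.2 x -> v x = pol k x.
  move=> [[b1 b2] b3] /=.
  have [p [[c [a1 [a2 [a3 [b11 [b22 [b33 [b12 [b13 [b23 Hp2]]]]]]]]]] Hp]] := H b1 b2 b3.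
  exists (fun i => nth 0 [:: c; a1; a2; a3; b11; b22; b33; b12; b13; b23] i).
  by move=> x hx; rewrite Hp // Hp2 /pol.
move=> /choice [f Hf].
by exists (fun b1 b2 b3 => f (b1, b2, b3)) => b1 b2 b3 x hx; exact: (Hf (b1, b2, b3)).
Qed.

Lemma sgnbE (v : R) : sgnb R (0 < v) * v = `|v|.
Proof.
rewrite /sgnb; case: ifPn => h; first by rewrite mul1r gtr0_norm.
by rewrite mulN1r ler0_norm // leNgt.
Qed.

Lemma sgnb2 b : sgnb R b * sgnb R b = 1.
Proof. by case: b; rewrite /sgnb ?mulr1 ?mulrNN ?mulr1. Qed.

Lemma tetra_node b1 b2 b3 (a1 a2 a3 : R) : 0 <= a1 -> 0 <= a2 -> 0 <= a3 -> a1 + a2 + a3 <= 1 ->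
  tetra b1 b2 b3 ((sgnb R b1 * a1, sgnb R b2 * a2), sgnb R b3 * a3).
Proof.
by move=> *; rewrite /tetra /X1 /X2 /X3 /= !mulrA !sgnb2 !mul1r.
Qed.

Lemma bd_node b1 b2 b3 (a1 a2 a3 : R) : 0 <= a1 -> 0 <= a2 -> 0 <= a3 -> a1 + a2 + a3 = 1 ->
  `|X1 ((sgnb R b1 * a1, sgnb R b2 * a2), sgnb R b3 * a3)| + `|X2 ((sgnb R b1 * a1, sgnb R b2 * a2), sgnb R b3 * a3)|
  + `|X3 ((sgnb R b1 * a1, sgnb R b2 * a2), sgnb R b3 * a3)| = 1.
Proof.
have nb b : `|sgnb R b| = 1 by case: b; rewrite /sgnb ?normrN normr1.
by move=> h1 h2 h3 <-; rewrite /X1 /X2 /X3 /= !normrM !nb !mul1r !ger0_norm.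
Qed.

Lemma comp1 (v : R * R * R -> R) (K : nat -> R) b1 b2 b3 :
  (forall x, tetra b1 b2 b3 x -> v x = pol K x) -> zero_on_bd v ->
  sgnb R b1 * sgnb R b2 * sgnb R b3 * (K 1%N / 6 + (2 * K 4%N * sgnb R b1 + K 7%N * sgnb R b2 + K 8%N * sgnb R b3) / 24)
  = - (sgnb R b2 * sgnb R b3) * (v ((0, sgnb R b2 / 2), 0) + v ((0, 0), sgnb R b3 / 2)) / 6.
Proof.
move=> HK Hb.
have N a1 a2 a3 h1 h2 h3 h4 := HK _ (@tetra_node b1 b2 b3 a1 a2 a3 h1 h2 h3 h4).
have B a1 a2 a3 h1 h2 h3 h4 := Hb _ (@bd_node b1 b2 b3 a1 a2 a3 h1 h2 h3 h4).
have z0 : (0 : R) <= 0 by [].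
have zh : (0 : R) <= 2^-1 by rewrite invr_ge0.
have z1 : (0 : R) <= 1 by [].
have n0 := N 0 0 0 z0 z0 z0 ltac:(lra).
have n1h := N 2^-1 0 0 zh z0 z0 ltac:(lra).
have n1 := N 1 0 0 z1 z0 z0 ltac:(lra).
have m1 := B 1 0 0 z1 z0 z0 ltac:(lra).
have n2h := N 0 2^-1 0 z0 zh z0 ltac:(lra).
have n2 := N 0 1 0 z0 z1 z0 ltac:(lra).
have m2 := B 0 1 0 z0 z1 z0 ltac:(lra).
have n3h := N 0 0 2^-1 z0 z0 zh ltac:(lra).
have n3 := N 0 0 1 z0 z0 z1 ltac:(lra).
have m3 := B 0 0 1 z0 z0 z1 ltac:(lra).
have n12 := N 2^-1 2^-1 0 zh zh z0 ltac:(lra).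
have m12 := B 2^-1 2^-1 0 zh zh z0 ltac:(lra).
have n13 := N 2^-1 0 2^-1 zh z0 zh ltac:(lra).
have m13 := B 2^-1 0 2^-1 zh z0 zh ltac:(lra).
have n23 := N 0 2^-1 2^-1 z0 zh zh ltac:(lra).
have m23 := B 0 2^-1 2^-1 z0 zh zh ltac:(lra).
move: n0 n1h n1 m1 n2h n2 m2 n3h n3 m3 n12 m12 n13 m13 n23 m23.
clear N B HK Hb.
rewrite /pol /X1 /X2 /X3 /= !mulr0.
by case: b1; case: b2; case: b3; rewrite /sgnb => *; lra.
Qed.

Lemma comp2 (v : R * R * R -> R) (K : nat -> R) b1 b2 b3 :
  (forall x, tetra b1 b2 b3 x -> v x = pol K x) -> zero_on_bd v ->
  sgnb R b1 * sgnb R b2 * sgnb R b3 * (K 2%N / 6 + (K 7%N * sgnb R b1 + 2 * K 5%N * sgnb R b2 + K 9%N * sgnb R b3) / 24)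
  = - (sgnb R b1 * sgnb R b3) * (v ((sgnb R b1 / 2, 0), 0) + v ((0, 0), sgnb R b3 / 2)) / 6.
Proof.
move=> HK Hb.
have N a1 a2 a3 h1 h2 h3 h4 := HK _ (@tetra_node b1 b2 b3 a1 a2 a3 h1 h2 h3 h4).
have B a1 a2 a3 h1 h2 h3 h4 := Hb _ (@bd_node b1 b2 b3 a1 a2 a3 h1 h2 h3 h4).
have z0 : (0 : R) <= 0 by [].
have zh : (0 : R) <= 2^-1 by rewrite invr_ge0.
have z1 : (0 : R) <= 1 by [].
have n0 := N 0 0 0 z0 z0 z0 ltac:(lra).
have n1h := N 2^-1 0 0 zh z0 z0 ltac:(lra).
have n1 := N 1 0 0 z1 z0 z0 ltac:(lra).
have m1 := B 1 0 0 z1 z0 z0 ltac:(lra).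
have n2h := N 0 2^-1 0 z0 zh z0 ltac:(lra).
have n2 := N 0 1 0 z0 z1 z0 ltac:(lra).
have m2 := B 0 1 0 z0 z1 z0 ltac:(lra).
have n3h := N 0 0 2^-1 z0 z0 zh ltac:(lra).
have n3 := N 0 0 1 z0 z0 z1 ltac:(lra).
have m3 := B 0 0 1 z0 z0 z1 ltac:(lra).
have n12 := N 2^-1 2^-1 0 zh zh z0 ltac:(lra).
have m12 := B 2^-1 2^-1 0 zh zh z0 ltac:(lra).
have n13 := N 2^-1 0 2^-1 zh z0 zh ltac:(lra).
have m13 := B 2^-1 0 2^-1 zh z0 zh ltac:(lra).
have n23 := N 0 2^-1 2^-1 z0 zh zh ltac:(lra).
have m23 := B 0 2^-1 2^-1 z0 zh zh ltac:(lra).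
move: n0 n1h n1 m1 n2h n2 m2 n3h n3 m3 n12 m12 n13 m13 n23 m23.
clear N B HK Hb.
rewrite /pol /X1 /X2 /X3 /= !mulr0.
by case: b1; case: b2; case: b3; rewrite /sgnb => *; lra.
Qed.

Lemma comp3 (v : R * R * R -> R) (K : nat -> R) b1 b2 b3 :
  (forall x, tetra b1 b2 b3 x -> v x = pol K x) -> zero_on_bd v ->
  sgnb R b1 * sgnb R b2 * sgnb R b3 * (K 3%N / 6 + (K 8%N * sgnb R b1 + K 9%N * sgnb R b2 + 2 * K 6%N * sgnb R b3) / 24)
  = - (sgnb R b1 * sgnb R b2) * (v ((sgnb R b1 / 2, 0), 0) + v ((0, sgnb R b2 / 2), 0)) / 6.
Proof.
move=> HK Hb.
have N a1 a2 a3 h1 h2 h3 h4 := HK _ (@tetra_node b1 b2 b3 a1 a2 a3 h1 h2 h3 h4).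
have B a1 a2 a3 h1 h2 h3 h4 := Hb _ (@bd_node b1 b2 b3 a1 a2 a3 h1 h2 h3 h4).
have z0 : (0 : R) <= 0 by [].
have zh : (0 : R) <= 2^-1 by rewrite invr_ge0.
have z1 : (0 : R) <= 1 by [].
have n0 := N 0 0 0 z0 z0 z0 ltac:(lra).
have n1h := N 2^-1 0 0 zh z0 z0 ltac:(lra).
have n1 := N 1 0 0 z1 z0 z0 ltac:(lra).
have m1 := B 1 0 0 z1 z0 z0 ltac:(lra).
have n2h := N 0 2^-1 0 z0 zh z0 ltac:(lra).
have n2 := N 0 1 0 z0 z1 z0 ltac:(lra).
have m2 := B 0 1 0 z0 z1 z0 ltac:(lra).
have n3h := N 0 0 2^-1 z0 z0 zh ltac:(lra).
have n3 := N 0 0 1 z0 z0 z1 ltac:(lra).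
have m3 := B 0 0 1 z0 z0 z1 ltac:(lra).
have n12 := N 2^-1 2^-1 0 zh zh z0 ltac:(lra).
have m12 := B 2^-1 2^-1 0 zh zh z0 ltac:(lra).
have n13 := N 2^-1 0 2^-1 zh z0 zh ltac:(lra).
have m13 := B 2^-1 0 2^-1 zh z0 zh ltac:(lra).
have n23 := N 0 2^-1 2^-1 z0 zh zh ltac:(lra).
have m23 := B 0 2^-1 2^-1 z0 zh zh ltac:(lra).
move: n0 n1h n1 m1 n2h n2 m2 n3h n3 m3 n12 m12 n13 m13 n23 m23.
clear N B HK Hb.
rewrite /pol /X1 /X2 /X3 /= !mulr0.
by case: b1; case: b2; case: b3; rewrite /sgnb => *; lra.
Qed.

End N.

Set Implicit Arguments. Unset Strict Implicit. Unset Printing Implicit Defensive.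

Section D.
Context (R : realType).

Lemma ar1 (a b c : R) : a + b + c < 1 -> a < 1 - (b + c).
Proof. by move=> ?; lra. Qed.

Lemma ar2 (a b c : R) : a <= 1 - (b + c) -> a + b + c <= 1.
Proof. by move=> ?; lra. Qed.

Lemma deriv1 (v : R * R * R -> R) (K : nat -> R) (x : R * R * R) :
  (forall y, tetra (0 < X1 x) (0 < X2 x) (0 < X3 x) y -> v y = pol K y) ->
  @Omega R x -> X1 x != 0 ->
  derive1 (fun t => v ((t, X2 x), X3 x)) (X1 x) = K 1%N + 2 * K 4%N * X1 x + K 7%N * X2 x + K 8%N * X3 x.
Proof.
move=> HK hO hx.
rewrite (@dpoly _ _ _ (K 0%N + K 2%N * X2 x + K 3%N * X3 x + K 5%N * X2 x ^+ 2 + K 6%N * X3 x ^+ 2 + K 9%N * X2 x * X3 x)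
   (K 1%N + K 7%N * X2 x + K 8%N * X3 x) (K 4%N)); first by ring.
have h1 : 0 < sgnb R (0 < X1 x) * X1 x by rewrite sgnbE normr_gt0.
have h2 : sgnb R (0 < X1 x) * X1 x < 1 - (sgnb R (0 < X2 x) * X2 x + sgnb R (0 < X3 x) * X3 x).
  by rewrite !sgnbE; apply: ar1.
apply: filterS (N1 h1 h2) => t [t1 t2].
rewrite HK; first by rewrite /pol /X1 /X2 /X3 /=; ring.
rewrite /tetra /X1 /X2 /X3 /=; rewrite -/(X2 x) -/(X3 x) !sgnbE.
split => //; split => //; split => //.
by move: t2; rewrite !sgnbE; apply: ar2.
Qed.

Lemma ar3 (a b c : R) : b <= 1 - (a + c) -> a + b + c <= 1.
Proof. by move=> ?; lra. Qed.
Lemma ar4 (a b c : R) : a + b + c < 1 -> b < 1 - (a + c).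
Proof. by move=> ?; lra. Qed.
Lemma ar5 (a b c : R) : c <= 1 - (a + b) -> a + b + c <= 1.
Proof. by move=> ?; lra. Qed.
Lemma ar6 (a b c : R) : a + b + c < 1 -> c < 1 - (a + b).
Proof. by move=> ?; lra. Qed.

Lemma deriv2 (v : R * R * R -> R) (K : nat -> R) (x : R * R * R) :
  (forall y, tetra (0 < X1 x) (0 < X2 x) (0 < X3 x) y -> v y = pol K y) ->
  @Omega R x -> X2 x != 0 ->
  derive1 (fun t => v ((X1 x, t), X3 x)) (X2 x) = K 2%N + 2 * K 5%N * X2 x + K 7%N * X1 x + K 9%N * X3 x.
Proof.
move=> HK hO hx.
rewrite (@dpoly _ _ _ (K 0%N + K 1%N * X1 x + K 3%N * X3 x + K 4%N * X1 x ^+ 2 + K 6%N * X3 x ^+ 2 + K 8%N * X1 x * X3 x)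
   (K 2%N + K 7%N * X1 x + K 9%N * X3 x) (K 5%N)); first by ring.
have h1 : 0 < sgnb R (0 < X2 x) * X2 x by rewrite sgnbE normr_gt0.
have h2 : sgnb R (0 < X2 x) * X2 x < 1 - (sgnb R (0 < X1 x) * X1 x + sgnb R (0 < X3 x) * X3 x).
  by rewrite !sgnbE; apply: ar4.
apply: filterS (N1 h1 h2) => t [t1 t2].
rewrite HK; first by rewrite /pol /X1 /X2 /X3 /=; ring.
rewrite /tetra /X1 /X2 /X3 /=; rewrite -/(X1 x) -/(X3 x) !sgnbE.
split => //; split => //; split => //.
by move: t2; rewrite !sgnbE; apply: ar3.
Qed.

Lemma deriv3 (v : R * R * R -> R) (K : nat -> R) (x : R * R * R) :
  (forall y, tetra (0 < X1 x) (0 < X2 x) (0 < X3 x) y -> v y = pol K y) ->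
  @Omega R x -> X3 x != 0 ->
  derive1 (fun t => v ((X1 x, X2 x), t)) (X3 x) = K 3%N + 2 * K 6%N * X3 x + K 8%N * X1 x + K 9%N * X2 x.
Proof.
move=> HK hO hx.
rewrite (@dpoly _ _ _ (K 0%N + K 1%N * X1 x + K 2%N * X2 x + K 4%N * X1 x ^+ 2 + K 5%N * X2 x ^+ 2 + K 7%N * X1 x * X2 x)
   (K 3%N + K 8%N * X1 x + K 9%N * X2 x) (K 6%N)); first by ring.
have h1 : 0 < sgnb R (0 < X3 x) * X3 x by rewrite sgnbE normr_gt0.
have h2 : sgnb R (0 < X3 x) * X3 x < 1 - (sgnb R (0 < X1 x) * X1 x + sgnb R (0 < X2 x) * X2 x).
  by rewrite !sgnbE; apply: ar6.
apply: filterS (N1 h1 h2) => t [t1 t2].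
rewrite HK; first by rewrite /pol /X1 /X2 /X3 /=; ring.
rewrite /tetra /X1 /X2 /X3 /=; rewrite -/(X1 x) -/(X2 x) !sgnbE.
split => //; split => //; split => //.
by move: t2; rewrite !sgnbE; apply: ar5.
Qed.

Lemma ball_pt (x : R * R * R) (e a1 a2 a3 : R) : `|a1| < e -> `|a2| < e -> `|a3| < e ->
  ball x e ((X1 x + a1, X2 x + a2), X3 x + a3).
Proof.
move=> h1 h2 h3; case: x => [[x1 x2] x3].
rewrite /ball /= /prod_ball /= /X1 /X2 /X3 /=.
by split; [split|]; rewrite /ball /= opprD addNKr normrN.
Qed.

Lemma int_pos b1 b2 b3 (x : R * R * R) : interior (tetra b1 b2 b3) x ->
  0 < sgnb R b1 * X1 x /\ 0 < sgnb R b2 * X2 x /\ 0 < sgnb R b3 * X3 x.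
Proof.
move=> /nbhs_ballP [e e0 He].
have e2 : 0 < e / 2 by rewrite divr_gt0.
have ns b : `|- (sgnb R b * (e / 2))| < e.
  rewrite normrN normrM.
  have -> : `|sgnb R b| = 1 by case: b; rewrite /sgnb /= ?normrN normr1.
  rewrite mul1r gtr0_norm //; lra.
have n0 : `|0 : R| < e by rewrite normr0.
have [t1 _] := He _ (ball_pt x (ns b1) n0 n0).
have [_ [t2 _]] := He _ (ball_pt x n0 (ns b2) n0).
have [_ [_ [t3 _]]] := He _ (ball_pt x n0 n0 (ns b3)).
move: t1 t2 t3; rewrite /X1 /X2 /X3 /= !mulrDr !mulrN !mulrA !sgnb2 !mul1r ?mulr0 ?addr0 => t1 t2 t3.
split; [|split]; lra.
Qed.

Lemma qbar_int b1 b2 b3 (x : R * R * R) : interior (tetra b1 b2 b3) x ->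
  qbar x = sgnb R b1 * sgnb R b2 * sgnb R b3.
Proof.
move=> /int_pos [h1 [h2 h3]]; rewrite /qbar.
have S b (u : R) : 0 < sgnb R b * u -> Num.sg u = sgnb R b.
  case: b; rewrite /sgnb ?mul1r ?mulN1r ?oppr_gt0 => h.
    exact: gtr0_sg.
  exact: ltr0_sg.
by rewrite (S _ _ h1) (S _ _ h2) (S _ _ h3).
Qed.

Lemma qbarE (x : R * R * R) : qbar x =
  if [&& X1 x != 0, X2 x != 0 & X3 x != 0] then sgnb R (0 < X1 x) * sgnb R (0 < X2 x) * sgnb R (0 < X3 x) else 0.
Proof.
rewrite /qbar.
case: (sgnP (X1 x)) => h1; rewrite ?(gtr0_sg h1) ?(ltr0_sg h1) ?h1 ?sgr0 ?mul0r //=;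
case: (sgnP (X2 x)) => h2; rewrite ?(gtr0_sg h2) ?(ltr0_sg h2) ?h2 ?sgr0 ?mul0r ?mulr0 //=;
case: (sgnP (X3 x)) => h3; rewrite ?(gtr0_sg h3) ?(ltr0_sg h3) ?h3 ?sgr0 ?mul0r ?mulr0 //=.
Qed.

Lemma GfunE (C0 C1 C2 C3 : bool -> bool -> bool -> R) (x : R * R * R) : @Omega R x ->
  Gfun C0 C1 C2 C3 x = if [&& X1 x != 0, X2 x != 0 & X3 x != 0] then
    let b1 := (0 < X1 x) in let b2 := (0 < X2 x) in let b3 := (0 < X3 x) in
    C0 b1 b2 b3 + C1 b1 b2 b3 * `|X1 x| + C2 b1 b2 b3 * `|X2 x| + C3 b1 b2 b3 * `|X3 x| else 0.
Proof.
move=> hO; rewrite /Gfun /gfun.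
exact: (SumOct (fun b1 b2 b3 => C0 b1 b2 b3 + C1 b1 b2 b3 * `|X1 x| + C2 b1 b2 b3 * `|X2 x| + C3 b1 b2 b3 * `|X3 x|) hO).
Qed.
End D.


Theorem proposition3p2 (R : realType) :
  (* qbar is piecewise constant on the mesh *)
  (forall b1 b2 b3 : bool, exists c : R,
      forall x, interior (tetra b1 b2 b3) x -> qbar x = c) /\
  (* qbar in L^2_0(Omega) *)
  measurable_fun (@Omega R) (@qbar R) /\
  (@leb3 R).-integrable (@Omega R) (fun x => ((qbar x) ^+ 2)%:E) /\
  (\int[@leb3 R]_(x in @Omega R) (qbar x)%:E = 0)%E /\
  (* orthogonality to divergences of L^1_2 \cap W^{1,1}_0 vector fields *)
  (forall v1 v2 v3 : R * R * R -> R,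
      L12 v1 -> L12 v2 -> L12 v3 ->
      zero_on_bd v1 -> zero_on_bd v2 -> zero_on_bd v3 ->
      (\int[@leb3 R]_(x in @Omega R) (div3 v1 v2 v3 x * qbar x)%:E = 0)%E).
Proof.
pose Csg (b1 b2 b3 : bool) : R := sgnb R b1 * sgnb R b2 * sgnb R b3.
pose Z (b1 b2 b3 : bool) : R := 0.
pose One (b1 b2 b3 : bool) : R := 1.
have qG : {in @Omega R, forall x, qbar x = Gfun Csg Z Z Z x}.
  move=> x; rewrite inE => hO; rewrite GfunE // qbarE /Z.
  by case: ifP => // _ /=; rewrite !mul0r !addr0.
have q2G : {in @Omega R, forall x, (qbar x) ^+ 2 = Gfun One Z Z Z x}.
  move=> x; rewrite inE => hO; rewrite GfunE // qbarE /Z /One.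
  case: ifP => _ /=; last by rewrite expr0n.
  by rewrite !mul0r !addr0 !exprMn !expr2 !sgnb2 !mulr1.
split.
  move=> b1 b2 b3; exists (sgnb R b1 * sgnb R b2 * sgnb R b3) => x.
  exact: qbar_int.
split.
  have := measurable_int _ (ML_int Csg Z Z Z).
  move/measurable_EFinP.
  apply: eq_measurable_fun => x xO; exact/esym/qG.
split.
  apply: (eq_integrable _ _ _ _ (ML_int One Z Z Z)).
  - exact: mOmega.
  - by move=> x xO; rewrite q2G.
split.
  transitivity (\int[@leb3 R]_(x in @Omega R) (Gfun Csg Z Z Z x)%:E)%E.
    by apply: eq_integral => x xO; rewrite qG.
  rewrite ML_val /octs !big_cons big_nil /Csg /Z /sgnb /=.
  by congr EFin; field.
move=> v1 v2 v3 /L12_coef [P HP] /L12_coef [Q HQ] /L12_coef [S HS] bd1 bd2 bd3.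
pose C0 b1 b2 b3 := Csg b1 b2 b3 * (P b1 b2 b3 1%N + Q b1 b2 b3 2%N + S b1 b2 b3 3%N).
pose C1 b1 b2 b3 := Csg b1 b2 b3 * sgnb R b1 * (2 * P b1 b2 b3 4%N + Q b1 b2 b3 7%N + S b1 b2 b3 8%N).
pose C2 b1 b2 b3 := Csg b1 b2 b3 * sgnb R b2 * (P b1 b2 b3 7%N + 2 * Q b1 b2 b3 5%N + S b1 b2 b3 9%N).
pose C3 b1 b2 b3 := Csg b1 b2 b3 * sgnb R b3 * (P b1 b2 b3 8%N + Q b1 b2 b3 9%N + 2 * S b1 b2 b3 6%N).
transitivity (\int[@leb3 R]_(x in @Omega R) (Gfun C0 C1 C2 C3 x)%:E)%E.
  apply: eq_integral => x; rewrite inE => hO; congr EFin.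
  rewrite GfunE // qbarE; case: ifPn => H; last by rewrite mulr0.
  move: H => /and3P[n1 n2 n3].
  rewrite /div3 (deriv1 (HP _ _ _) hO n1) (deriv2 (HQ _ _ _) hO n2) (deriv3 (HS _ _ _) hO n3) /=.
  rewrite -!sgnbE /C0 /C1 /C2 /C3 /Csg.
  move: (P _ _ _) (Q _ _ _) (S _ _ _) => p q s.
  by case: (0 < X1 x); case: (0 < X2 x); case: (0 < X3 x); rewrite /sgnb /=; ring.
rewrite ML_val.
have Hoct b1 b2 b3 : C0 b1 b2 b3 / 6 + (C1 b1 b2 b3 + C2 b1 b2 b3 + C3 b1 b2 b3) / 24 =
  - (sgnb R b2 * sgnb R b3) * (v1 ((0, sgnb R b2 / 2), 0) + v1 ((0, 0), sgnb R b3 / 2)) / 6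
  + - (sgnb R b1 * sgnb R b3) * (v2 ((sgnb R b1 / 2, 0), 0) + v2 ((0, 0), sgnb R b3 / 2)) / 6
  + - (sgnb R b1 * sgnb R b2) * (v3 ((sgnb R b1 / 2, 0), 0) + v3 ((0, sgnb R b2 / 2), 0)) / 6.
  rewrite -(comp1 (HP b1 b2 b3) bd1) -(comp2 (HQ b1 b2 b3) bd2) -(comp3 (HS b1 b2 b3) bd3).
  rewrite /C0 /C1 /C2 /C3 /Csg.
  by field.
rewrite (eq_bigr _ (fun s _ => Hoct s.1.1 s.1.2 s.2)).
rewrite /octs !big_cons big_nil /sgnb /=.
by congr EFin; field.
Qed.
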